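(* Let $\mathcal P$ be a non-degenerate polar space of finite rank $n\ge2$ with no thin lines, and let $C=(X_\delta)_{\delta\le\omega}$ be a well ordered chain of nice subspaces of $\mathcal P$ (indexed by the ordinals $\delta\le\omega$, increasing) with $X_\omega=\mathcal P$. The following are equivalent: (a) $C$ is maximal among well ordered chains of $\mathfrak N(\mathcal P)$; (b) $C$ is maximal among all chains of $\mathfrak N(\mathcal P)$; (c) all the following hold: (1) $\langle F\rangle_{\mathcal P}=X_0$ for every frame $F$ of $X_0$; (2) for every $\delta<\omega$, $X_\delta$ is a maximal proper subspace of $X_{\delta+1}$; (3) for every limit ordinal $\gamma\le\omega$, $X_\gamma=\bigcup_{\delta<\gamma}X_\delta$.
   Context: A point-line geometry with each two points on at most one line; a subspace is a set of points containing every line meeting it in $\ge2$ points; $\langle S\rangle_{\mathcal P}$ is the smallest subspace containing $S$. Collinearity is written $\perp$. Singular subspaces are subspaces whose points are pairwise collinear (projective spaces); rank of $\mathcal P$ is the maximal projective rank (dimension $+1$) of a singular subspace. A nice subspace is a subspace containing two mutually disjoint maximal singular subspaces (equivalently $\mathcal P$ induces on it a non-degenerate polar space of rank $n$); $\mathfrak N(\mathcal P)$ is the set of nice subspaces ordered by inclusion. A frame is a pair of bases $\{p_1,\dots,p_n\}$, $\{p'_1,\dots,p'_n\}$ of two disjoint maximal singular subspaces with $p_i\perp p'_j$ iff $i\ne j$. *)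

(* Defs.v *)
From Stdlib Require Import List Arith.
Import ListNotations.
Set Implicit Arguments.
Unset Strict Implicit.

Section PolarSpace.
Variables (Point Line : Type) (inc : Point -> Line -> Prop).

Definition pset := Point -> Prop.
Definition subset (A B : pset) : Prop := forall x, A x -> B x.
Definition seteq (A B : pset) : Prop := forall x, A x <-> B x.
Definition fullset : pset := fun _ => True.

Definition point_line_geometry : Prop :=
  (forall L, exists p q, p <> q /\ inc p L /\ inc q L) /\
  (forall p q L M, p <> q -> inc p L -> inc q L -> inc p M -> inc q M -> L = M).

Definition no_thin_lines : Prop :=
  forall L, exists p q r, p <> q /\ p <> r /\ q <> r /\ inc p L /\ inc q L /\ inc r L.

Definition collinear (p q : Point) : Prop := p = q \/ exists L, inc p L /\ inc q L.

Definition subspace (S : pset) : Prop :=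
  forall L p q, p <> q -> inc p L -> inc q L -> S p -> S q ->
    forall r, inc r L -> S r.

Definition span (S : pset) : pset :=
  fun x => forall T, subspace T -> subset S T -> T x.

Definition singular (S : pset) : Prop :=
  subspace S /\ forall p q, S p -> S q -> collinear p q.

Definition max_singular (S : pset) : Prop :=
  singular S /\ forall T, singular T -> subset S T -> subset T S.

Definition lset (l : list Point) : pset := fun x => In x l.

Definition independent (l : list Point) : Prop :=
  NoDup l /\ forall x, In x l -> ~ span (fun y => In y l /\ y <> x) x.

Definition basis_of (S : pset) (l : list Point) : Prop :=
  independent l /\ seteq (span (lset l)) S.

(* Rank: the maximal projective rank (dimension + 1, i.e. size of a basis)
   of a singular subspace is n. *)
Definition has_rank (n : nat) : Prop :=
  (exists S l, singular S /\ basis_of S l /\ length l = n) /\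
  (forall S l, singular S -> independent l -> subset (lset l) S -> length l <= n).

(* Non-degenerate polar space (one-or-all axiom, no point collinear to all). *)
Definition polar_space : Prop :=
  point_line_geometry /\
  (forall p L, ~ inc p L ->
     (exists q, inc q L /\ collinear p q /\
        forall q', inc q' L -> collinear p q' -> q' = q) \/
     (forall q, inc q L -> collinear p q)).

Definition nondegenerate : Prop := forall p, exists q, ~ collinear p q.

Definition disjoint (A B : pset) : Prop := forall x, A x -> B x -> False.

Definition nice (X : pset) : Prop :=
  subspace X /\ exists M1 M2, max_singular M1 /\ max_singular M2 /\
    subset M1 X /\ subset M2 X /\ disjoint M1 M2.

Definition frame_of (n : nat) (X : pset) (p p' : nat -> Point) : Prop :=
  exists M1 M2, max_singular M1 /\ max_singular M2 /\
    subset M1 X /\ subset M2 X /\ disjoint M1 M2 /\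
    basis_of M1 (map p (seq 0 n)) /\ basis_of M2 (map p' (seq 0 n)) /\
    forall i j, i < n -> j < n -> (collinear (p i) (p' j) <-> i <> j).

Definition frame_points (n : nat) (p p' : nat -> Point) : pset :=
  fun x => exists i, i < n /\ (x = p i \/ x = p' i).

Definition family := pset -> Prop.

Definition chain (D : family) : Prop :=
  (forall Y, D Y -> nice Y) /\
  (forall Y Z, D Y -> D Z -> subset Y Z \/ subset Z Y).

Definition well_ordered_chain (D : family) : Prop :=
  chain D /\
  forall E : family, (forall Y, E Y -> D Y) -> (exists Y, E Y) ->
    exists Y, E Y /\ forall Z, E Z -> subset Y Z.

Definition fmem (D : family) (Y : pset) : Prop := exists Y', D Y' /\ seteq Y Y'.
Definition fsubset (C D : family) : Prop := forall Y, C Y -> fmem D Y.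

Definition maximal_among_wo_chains (C : family) : Prop :=
  forall D, well_ordered_chain D -> fsubset C D -> fsubset D C.

Definition maximal_among_chains (C : family) : Prop :=
  forall D, chain D -> fsubset C D -> fsubset D C.

(* The chain (X_delta)_{delta <= omega}: X_k for k : nat, X_omega = whole space. *)
Definition omega_chain (X : nat -> pset) : family :=
  fun Y => (exists k, Y = X k) \/ Y = fullset.

Definition maximal_proper_subspace (X Y : pset) : Prop :=
  subspace X /\ subset X Y /\ ~ subset Y X /\
  forall Z, subspace Z -> subset X Z -> subset Z Y -> seteq Z X \/ seteq Z Y.

End PolarSpace.

(* Main.v *)
Require Import Defs.
From Stdlib Require Import List Arith Lia Classical.
Import ListNotations.

Section S.
Variables (Point Line : Type) (inc : Point -> Line -> Prop).

Lemma span_sub (A : pset Point) : subspace inc (span inc A).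
Proof.
  intros L p q Hpq HpL HqL Hp Hq r HrL T HT HAT.
  exact (HT L p q Hpq HpL HqL (Hp T HT HAT) (Hq T HT HAT) r HrL).
Qed.

Lemma span_incl (A : pset Point) : subset A (span inc A).
Proof. intros x Hx T HT HAT. exact (HAT x Hx). Qed.

Lemma span_min (A T : pset Point) : subspace inc T -> subset A T -> subset (span inc A) T.
Proof. intros HT HAT x Hx. exact (Hx T HT HAT). Qed.

Lemma nice_up (X Z : pset Point) : nice inc X -> subspace inc Z -> subset X Z -> nice inc Z.
Proof.
  intros [_ [M1 [M2 [H1 [H2 [S1 [S2 D]]]]]]] HZ XZ.
  split; [exact HZ|]. exists M1, M2.
  refine (conj H1 (conj H2 (conj _ (conj _ D)))).
  - intros x Hx; apply XZ, S1, Hx.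
  - intros x Hx; apply XZ, S2, Hx.
Qed.

Definition addf (C : family Point) (Z : pset Point) : family Point :=
  fun Y => C Y \/ Y = Z.

Lemma addf_chain C Z : chain inc C -> nice inc Z ->
  (forall Y, C Y -> subset Y Z \/ subset Z Y) -> chain inc (addf C Z).
Proof.
  intros [Hn Hc] HZ Hcmp. split.
  - intros Y [HY| ->]; auto.
  - intros Y W [HY| ->] [HW| ->].
    + auto.
    + auto.
    + destruct (Hcmp W HW); auto.
    + left; intros x h; exact h.
Qed.

Lemma addf_wo C Z : well_ordered_chain inc C -> nice inc Z ->
  (forall Y, C Y -> subset Y Z \/ subset Z Y) -> well_ordered_chain inc (addf C Z).
Proof.
  intros [HC Hwo] HZ Hcmp. split; [apply addf_chain; auto|].
  intros E HE [Y1 HY1].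
  destruct (classic (exists Y, E Y /\ C Y)) as [Hex|Hno].
  - destruct (Hwo (fun Y => E Y /\ C Y)) as [Y0 [[HE0 HC0] Hmin]].
    + intros Y [_ h]; exact h.
    + exact Hex.
    + destruct (classic (E Z)) as [HEZ|HnZ].
      * destruct (Hcmp Y0 HC0) as [h|h].
        -- exists Y0; split; auto. intros W HW. destruct (HE W HW) as [h'| ->].
           ++ apply Hmin; auto.
           ++ exact h.
        -- exists Z; split; auto. intros W HW. destruct (HE W HW) as [h'| ->].
           ++ intros x hx; apply (Hmin W (conj HW h')), h, hx.
           ++ intros x hx; exact hx.
      * exists Y0; split; auto. intros W HW. destruct (HE W HW) as [h'| ->].
        -- apply Hmin; auto.
        -- contradiction.
  - exists Z. assert (EZ : E Z).
    { destruct (HE Y1 HY1) as [h|<-]; auto. exfalso; apply Hno; eauto. }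
    split; auto. intros W HW. destruct (HE W HW) as [h| ->].
    + exfalso; apply Hno; eauto.
    + intros x hx; exact hx.
Qed.

Lemma addf_fsub C Z : fsubset C (addf C Z).
Proof. intros Y HY. exists Y. split. left; auto. intros x; tauto. Qed.

Lemma addf_mem C Z : fmem (addf C Z) Z.
Proof. exists Z. split. right; auto. intros x; tauto. Qed.

Lemma fmem_from_wo C Z : maximal_among_wo_chains inc C -> well_ordered_chain inc C ->
  nice inc Z -> (forall Y, C Y -> subset Y Z \/ subset Z Y) -> fmem C Z.
Proof.
  intros Hmax Hwo HZ Hcmp.
  assert (H := Hmax _ (@addf_wo C Z Hwo HZ Hcmp) (addf_fsub C Z) Z (or_intror eq_refl)).
  exact H.
Qed.

Lemma fmem_from_ch C Z : maximal_among_chains inc C -> chain inc C ->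
  nice inc Z -> (forall Y, C Y -> subset Y Z \/ subset Z Y) -> fmem C Z.
Proof.
  intros Hmax Hc HZ Hcmp.
  exact (Hmax _ (@addf_chain C Z Hc HZ Hcmp) (addf_fsub C Z) Z (or_intror eq_refl)).
Qed.

Lemma min_nat (P : nat -> Prop) : forall m, P m -> exists k, P k /\ forall j, j < k -> ~ P j.
Proof.
  intro m. induction m as [m IH] using lt_wf_ind. intros Pm.
  destruct (classic (exists j, j < m /\ P j)) as [[j [Hj Pj]]|Hno].
  - exact (IH j Hj Pj).
  - exists m. split; auto. intros j Hj Pj. apply Hno; eauto.
Qed.

End S.


Section M.
Variables (Point Line : Type) (inc : Point -> Line -> Prop) (n : nat).

Lemma frame_mono (Y Y' : pset Point) p p' : subset Y Y' -> frame_of inc n Y p p' -> frame_of inc n Y' p p'.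
Proof.
  intros HY [M1 [M2 [A [B [C [D [E [F [G H]]]]]]]]].
  exists M1, M2. repeat (split; [assumption|]).
  split; [intros x hx; apply HY, C, hx|].
  split; [intros x hx; apply HY, D, hx|].
  auto.
Qed.

Lemma frame_pts_in (Y : pset Point) p p' : frame_of inc n Y p p' ->
  subset (frame_points n p p') Y.
Proof.
  intros [M1 [M2 [A [B [C [D [E [[_ F1] [[_ G1] H]]]]]]]]] x [i [Hi [-> | ->]]].
  - apply C, (proj1 (F1 _)), span_incl. unfold lset. apply in_map, in_seq. lia.
  - apply D, (proj1 (G1 _)), span_incl. unfold lset. apply in_map, in_seq. lia.
Qed.

Lemma frame_M_in (X : pset Point) p p' : frame_of inc n X p p' ->
  exists M1 M2, max_singular inc M1 /\ max_singular inc M2 /\ disjoint M1 M2 /\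
   subset M1 (span inc (frame_points n p p')) /\ subset M2 (span inc (frame_points n p p')).
Proof.
  intros [M1 [M2 [A [B [C [D [E [[_ F1] [[_ G1] H]]]]]]]]].
  exists M1, M2. repeat (split; [assumption|]). split.
  - intros x hx. apply (proj2 (F1 _)) in hx. revert x hx. apply span_min. apply span_sub.
    intros y hy. apply span_incl. unfold lset in hy. apply in_map_iff in hy.
    destruct hy as [i [<- Hi]]. apply in_seq in Hi. exists i. split; [lia|auto].
  - intros x hx. apply (proj2 (G1 _)) in hx. revert x hx. apply span_min. apply span_sub.
    intros y hy. apply span_incl. unfold lset in hy. apply in_map_iff in hy.
    destruct hy as [i [<- Hi]]. apply in_seq in Hi. exists i. split; [lia|auto].
Qed.

Lemma main_from_frames
  (X : nat -> pset Point)
  (Hnice : forall k, nice inc (X k))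
  (Hnice_om : nice inc (@fullset Point))
  (Hincr : forall k m, k < m -> subset (X k) (X m) /\ ~ subset (X m) (X k))
  (Hincr_om : forall k, ~ subset (@fullset Point) (X k))
  (Hwo : well_ordered_chain inc (omega_chain X))
  (Hframe : forall Y, nice inc Y -> exists p p', frame_of inc n Y p p') :
  (maximal_among_wo_chains inc (omega_chain X) <->
   maximal_among_chains inc (omega_chain X)) /\
  (maximal_among_chains inc (omega_chain X) <->
   ((forall p p', frame_of inc n (X 0) p p' ->
        seteq (span inc (frame_points n p p')) (X 0)) /\
    (forall k, maximal_proper_subspace inc (X k) (X (S k))) /\
    (forall x, exists k, X k x))).
Proof.
  assert (Hle : forall j k, j <= k -> subset (X j) (X k)).
  { intros j k h. destruct (Nat.eq_dec j k) as [->|ne].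
    - intros x hx; exact hx.
    - apply Hincr. lia. }
  assert (Hch : chain inc (omega_chain X)) by apply Hwo.
  set (C := omega_chain X) in *.
  assert (Hcmp_of : forall D Z, chain inc D -> fsubset C D -> D Z ->
     forall Y, C Y -> subset Y Z \/ subset Z Y).
  { intros D Z [_ HD] HCD HZ Y HY. destruct (HCD Y HY) as [Y' [HY' Heq]].
    destruct (HD Z Y' HZ HY') as [h|h].
    - right. intros x hx. apply Heq, h, hx.
    - left. intros x hx. apply h, Heq, hx. }
  split.
  - split.
    + intros Hmax D HD HCD Z HZ.
      eapply fmem_from_wo; [exact Hmax|exact Hwo| |].
      * apply (proj1 HD), HZ.
      * apply (Hcmp_of D Z HD HCD HZ).
    + intros Hmax D HD HCD. apply Hmax; auto. apply HD.
  - split.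
    + intros Hmax. split; [|split].
      * intros p p' Hf.
        set (F := span inc (frame_points n p p')).
        assert (FX : subset F (X 0)).
        { apply span_min. apply (proj1 (Hnice 0)). eapply frame_pts_in; exact Hf. }
        assert (Fn : nice inc F).
        { destruct (frame_M_in _ _ _ Hf) as [M1 [M2 [A [B [D [E G]]]]]].
          split. apply span_sub. exists M1, M2. auto. }
        assert (cmp : forall Y, C Y -> subset Y F \/ subset F Y).
        { intros Y [[k ->]| ->].
           ++ right. intros x hx. apply (Hle 0 k). lia. apply FX, hx.
           ++ right. intros x hx; exact I. }
        destruct (@fmem_from_ch _ _ inc C F Hmax Hch Fn cmp) as [Y' [[[k ->]| ->] Heq]].
        -- destruct k.
           ++ exact Heq.
           ++ exfalso. apply (proj2 (Hincr 0 (S k) ltac:(lia))).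
              intros x hx. apply FX, Heq, hx.
        -- exfalso. apply (Hincr_om 0). intros x hx. apply FX, Heq, hx.
      * intros k. split; [apply (Hnice k)|]. split; [apply Hincr; lia|].
        split; [apply Hincr; lia|].
        intros Z HZ HkZ HZk.
        assert (Zn : nice inc Z) by (exact (@nice_up _ _ inc (X k) Z (Hnice k) HZ HkZ)).
        assert (cmp : forall Y, C Y -> subset Y Z \/ subset Z Y).
        { intros Y [[j ->]| ->].
           ++ destruct (le_lt_dec j k) as [h|h].
              ** left. intros x hx. apply HkZ, (Hle j k h), hx.
              ** right. intros x hx. apply (Hle (S k) j). lia. apply HZk, hx.
           ++ right. intros x hx; exact I. }
        destruct (@fmem_from_ch _ _ inc C Z Hmax Hch Zn cmp) as [Y' [[[j ->]| ->] Heq]].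
        -- destruct (le_lt_dec j k) as [h|h].
           ++ left. intros x; split; intros hx.
              ** apply (Hle j k h), Heq, hx.
              ** apply HkZ, hx.
           ++ right. intros x; split; intros hx.
              ** apply HZk, hx.
              ** apply Heq, (Hle (S k) j). lia. exact hx.
        -- exfalso. apply (Hincr_om (S k)). intros x hx. apply HZk, Heq. exact I.
      * set (U := fun x => exists k, X k x).
        assert (HU : subspace inc U).
        { intros L a b Hab HaL HbL [i Hi] [j Hj] r HrL.
          exists (max i j).
          apply (proj1 (Hnice (max i j)) L a b Hab HaL HbL); auto.
          - apply (Hle i). lia. exact Hi.
          - apply (Hle j). lia. exact Hj. }
        assert (Un : nice inc U).
        { apply (@nice_up _ _ inc (X 0) U (Hnice 0) HU). intros x hx; exists 0; exact hx. }
        assert (cmp : forall Y, C Y -> subset Y U \/ subset U Y).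
        { intros Y [[j ->]| ->].
           ++ left. intros x hx. exists j; exact hx.
           ++ right. intros x hx; exact I. }
        destruct (@fmem_from_ch _ _ inc C U Hmax Hch Un cmp) as [Y' [[[j ->]| ->] Heq]].
        -- exfalso. apply (proj2 (Hincr j (S j) ltac:(lia))).
           intros x hx. apply Heq. exists (S j). exact hx.
        -- intros x. apply Heq. exact I.
    + intros [H1 [H2 H3]] D HD HCD Z HZ.
      assert (Hc := Hcmp_of D Z HD HCD HZ).
      assert (Zn : nice inc Z) by (apply (proj1 HD), HZ).
      destruct (Hc (X 0) (or_introl (ex_intro _ 0 eq_refl))) as [h0|h0].
      *
        destruct (classic (exists k, ~ subset (X k) Z)) as [[k0 hk0]|hall].
        -- destruct (@min_nat (fun k => ~ subset (X k) Z) k0 hk0) as [k [hk hmin]].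
           destruct k as [|j]; [contradiction|].
           assert (hj : subset (X j) Z).
           { apply NNPP. intro hn. exact (hmin j ltac:(lia) hn). }
           assert (hZk : subset Z (X (S j))).
           { destruct (Hc (X (S j)) (or_introl (ex_intro _ (S j) eq_refl))); [contradiction|auto]. }
           destruct (H2 j) as [_ [_ [_ Hm]]].
           destruct (Hm Z (proj1 Zn) hj hZk) as [e|e].
           ++ exists (X j). split; [left; exists j; auto|exact e].
           ++ exists (X (S j)). split; [left; exists (S j); auto|exact e].
        -- exists (@fullset Point). split; [right; reflexivity|].
           intros x; split; intros _; [exact I|].
           destruct (H3 x) as [k hk]. apply NNPP. intro hn. apply hall.
           exists k. intro hs. apply hn, hs, hk.
      *
        destruct (Hframe Z Zn) as [p [p' Hf]].
        assert (Hf0 := frame_mono _ _ _ _ h0 Hf).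
        assert (E := H1 p p' Hf0).
        exists (X 0). split; [left; exists 0; auto|].
        intros x; split; intros hx.
        -- apply h0, hx.
        -- apply E in hx. revert x hx. apply span_min. apply (proj1 Zn).
           eapply frame_pts_in; exact Hf.
Qed.
End M.

Set Implicit Arguments.
Unset Strict Implicit.

Section G.
Variables (Point Line : Type) (inc : Point -> Line -> Prop).
Hypothesis Hgeom : polar_space inc.

Notation col := (collinear inc).
Notation sp := (span inc).

Lemma col_refl x : col x x.
Proof. left; auto. Qed.

Lemma col_sym x y : col x y -> col y x.
Proof. intros [->|[L [h1 h2]]]; [left; auto|right; exists L; auto]. Qed.

Lemma perp_sub x : subspace inc (fun y => col x y).
Proof.
  intros L a b Hab HaL HbL Ha Hb r HrL.
  destruct (classic (inc x L)) as [HxL|HxL].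
  - right. exists L; auto.
  - destruct (proj2 Hgeom x L HxL) as [[q [HqL [_ Hu]]]|Hall].
    + exfalso. apply Hab. rewrite (Hu a HaL Ha), (Hu b HbL Hb). auto.
    + apply Hall, HrL.
Qed.

Lemma sub_inter (A B : pset Point) : subspace inc A -> subspace inc B ->
  subspace inc (fun x => A x /\ B x).
Proof.
  intros HA HB L a b Hab HaL HbL [Ha1 Ha2] [Hb1 Hb2] r HrL. split.
  - exact (HA L a b Hab HaL HbL Ha1 Hb1 r HrL).
  - exact (HB L a b Hab HaL HbL Ha2 Hb2 r HrL).
Qed.

Lemma span_mono (A B : pset Point) : subset A B -> subset (sp A) (sp B).
Proof.
  intros HAB. apply span_min. apply span_sub. intros x hx. apply span_incl, HAB, hx.
Qed.

Definition clique (A : pset Point) := forall a b, A a -> A b -> col a b.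

Lemma span_clique (A : pset Point) : clique A -> clique (sp A).
Proof.
  intros HA.
  assert (H1 : forall a x, A a -> sp A x -> col a x).
  { intros a x Ha Hx. revert x Hx. apply span_min. apply perp_sub.
    intros y hy. apply HA; auto. }
  intros x y Hx Hy. revert y Hy. apply span_min. apply perp_sub.
  intros a Ha. apply col_sym, H1; auto.
Qed.

Lemma clique_singular (A : pset Point) : clique A -> singular inc (sp A).
Proof. intros H. split. apply span_sub. apply span_clique, H. Qed.

Lemma line_of a b : a <> b -> col a b -> exists L, inc a L /\ inc b L.
Proof. intros ne [e|h]; [contradiction|exact h]. Qed.

Lemma on_line_col a b L : inc a L -> inc b L -> col a b.
Proof. intros; right; exists L; auto. Qed.

Lemma proj_pt (L : Line) a w : inc a L -> ~ col w a ->
  exists c, inc c L /\ col w c /\ forall c', inc c' L -> col w c' -> c' = c.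
Proof.
  intros HaL Hwa.
  assert (HwL : ~ inc w L) by (intro h; apply Hwa, (on_line_col h HaL)).
  destruct (proj2 Hgeom w L HwL) as [h|h].
  - exact h.
  - exfalso. apply Hwa, h, HaL.
Qed.

Lemma sub_line (T : pset Point) L a b r : subspace inc T -> a <> b -> inc a L -> inc b L ->
  T a -> T b -> inc r L -> T r.
Proof. intros HT ne Ha Hb Ta Tb Hr. exact (HT L a b ne Ha Hb Ta Tb r Hr). Qed.

Lemma line_sub L : subspace inc (fun x => inc x L).
Proof.
  intros M a b Hab HaM HbM HaL HbL r HrM.
  rewrite (proj2 (proj1 Hgeom) a b L M Hab HaL HbL HaM HbM). exact HrM.
Qed.

Definition Rmax (R M : pset Point) : Prop :=
  subspace inc M /\ clique M /\ subset M R /\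
  forall x, R x -> (forall y, M y -> col x y) -> M x.

Lemma max_Rmax M : max_singular inc M -> Rmax (@fullset Point) M.
Proof.
  intros [[HS HC] Hm]. split; [exact HS|]. split; [exact HC|].
  split; [intros x _; exact I|].
  intros x _ Hx.
  set (T := sp (fun y => M y \/ y = x)).
  assert (Tc : singular inc T).
  { apply clique_singular. intros a b [Ha| ->] [Hb| ->].
    - apply HC; auto.
    - apply col_sym, Hx; auto.
    - apply Hx; auto.
    - apply col_refl. }
  apply (Hm T Tc). intros y hy; apply span_incl; auto.
  apply span_incl; auto.
Qed.


Definition fr (M1 M2 : pset Point) (k : nat) (p p' : nat -> Point) :=
  (forall i, i < k -> M1 (p i) /\ M2 (p' i)) /\
  (forall i j, i < k -> j < k -> (col (p i) (p' j) <-> i <> j)).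

Definition Aempty (M1 : pset Point) k (p' : nat -> Point) :=
  forall x, M1 x -> (forall i, i < k -> col x (p' i)) -> False.

Definition plist k (p : nat -> Point) := map p (seq 0 k).

Lemma plist_in k p i : i < k -> lset (plist k p) (p i).
Proof. intros h. unfold lset, plist. apply in_map, in_seq. lia. Qed.

Lemma plist_inv k p x : lset (plist k p) x -> exists i, i < k /\ x = p i.
Proof.
  unfold lset, plist. intros h. apply in_map_iff in h. destruct h as [i [<- h]].
  apply in_seq in h. exists i; split; [lia|auto].
Qed.

Lemma fr_sym M1 M2 k p p' : fr M1 M2 k p p' -> fr M2 M1 k p' p.
Proof.
  intros [H1 H2]. split.
  - intros i hi; destruct (H1 i hi); auto.
  - intros i j hi hj. split.
    + intros h e. subst. apply (H2 j j hj hj); auto. apply col_sym; auto.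
    + intros ne. apply col_sym. apply (H2 j i hj hi). auto.
Qed.

Lemma span_full M1 M2 k p p' : subspace inc M1 -> clique M1 ->
  fr M1 M2 k p p' -> Aempty M1 k p' -> subset M1 (sp (lset (plist k p))).
Proof.
  intros HS HC [Hin Hpat] HA.
  set (P := sp (lset (plist k p))).
  assert (HP : subspace inc P) by apply span_sub.
  assert (Pp : forall i, i < k -> P (p i)) by (intros i hi; apply span_incl, plist_in, hi).
  assert (claim : forall m y, M1 y -> (forall i, i < k -> m <= i -> col y (p' i)) -> P y).
  { induction m as [|m IH]; intros y Hy Hc.
    - exfalso. apply (HA y Hy). intros i hi. apply Hc; auto; lia.
    - destruct (le_lt_dec k m) as [hkm|hmk].
      + apply IH; auto. intros i hi hmi. apply Hc; auto; lia.
      + destruct (classic (col y (p' m))) as [hy|hy].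
        * apply IH; auto. intros i hi hmi. destruct (Nat.eq_dec i m) as [->|ne]; auto.
          apply Hc; auto; lia.
        * destruct (classic (y = p m)) as [->|ne]; [apply Pp; auto|].
          assert (Hpm := proj1 (Hin m hmk)).
          destruct (line_of ne (HC _ _ Hy Hpm)) as [L [HyL HpL]].
          assert (hy' : ~ col (p' m) y) by (intro h; apply hy, col_sym, h).
          destruct (proj_pt HyL hy') as [c [HcL [Hcc Hu]]].
          assert (Mc : M1 c) by exact (HS L y (p m) ne HyL HpL Hy Hpm c HcL).
          assert (Pc : P c).
          { apply IH; auto. intros i hi hmi.
            destruct (Nat.eq_dec i m) as [->|ni]; [apply col_sym; auto|].
            apply col_sym.
            apply (@perp_sub (p' i) L y (p m) ne HyL HpL).
            - apply col_sym, Hc; auto; lia.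
            - apply col_sym, (proj2 (Hpat m i hmk hi)). auto.
            - exact HcL. }
          assert (cne : c <> p m).
          { intros ->. apply (proj1 (Hpat m m hmk hmk)); auto. apply col_sym, Hcc. }
          exact (HP L c (p m) cne HcL HpL Pc (Pp m hmk) y HyL). }
  intros y Hy. apply (claim k y Hy). intros; lia.
Qed.

Lemma fr_indep M1 M2 k p p' : fr M1 M2 k p p' -> independent inc (plist k p).
Proof.
  intros [Hin Hpat]. split.
  - unfold plist. apply NoDup_map_NoDup_ForallPairs.
    + intros i j hi hj e. apply in_seq in hi. apply in_seq in hj.
      destruct (Nat.eq_dec i j) as [|ne]; auto. exfalso.
      apply (proj1 (Hpat i i ltac:(lia) ltac:(lia))); auto.
      rewrite e. apply (proj2 (Hpat j i ltac:(lia) ltac:(lia))). auto.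
    + apply seq_NoDup.
  - intros x hx Hsp. destruct (plist_inv hx) as [i [hi ->]].
    assert (H : col (p' i) (p i)).
    { revert Hsp. apply span_min. apply perp_sub.
      intros y [hy ne]. destruct (plist_inv hy) as [j [hj ->]].
      apply col_sym. apply (proj2 (Hpat j i hj hi)). intros ->. apply ne; auto. }
    apply (proj1 (Hpat i i hi hi)); auto. apply col_sym, H.
Qed.


Lemma sp_in (A : pset Point) x : A x -> sp A x.
Proof. apply span_incl. Qed.
Lemma sp_sub (A : pset Point) : subspace inc (sp A).
Proof. apply span_sub. Qed.
Lemma sp_min (A T : pset Point) : subspace inc T -> subset A T -> subset (sp A) T.
Proof. apply span_min. Qed.

Lemma proj_ind M M' k p p' (Q : pset Point) : subspace inc M -> clique M ->
  fr M M' k p p' -> subspace inc Q -> (forall i, i < k -> Q (p i)) ->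
  (forall y, M y -> (forall i, i < k -> col y (p' i)) -> Q y) -> subset M Q.
Proof.
  intros HS HC [Hin Hpat] HQ Pp HA.
  assert (claim : forall m y, M y -> (forall i, i < k -> m <= i -> col y (p' i)) -> Q y).
  { induction m as [|m IH]; intros y Hy Hc.
    - apply HA; auto. intros i hi. apply Hc; auto; lia.
    - destruct (le_lt_dec k m) as [hkm|hmk].
      + apply IH; auto. intros i hi hmi. apply Hc; auto; lia.
      + destruct (classic (col y (p' m))) as [hy|hy].
        * apply IH; auto. intros i hi hmi. destruct (Nat.eq_dec i m) as [->|ne]; auto.
          apply Hc; auto; lia.
        * destruct (classic (y = p m)) as [->|ne]; [apply Pp; auto|].
          assert (Hpm := proj1 (Hin m hmk)).
          destruct (line_of ne (HC _ _ Hy Hpm)) as [L [HyL HpL]].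
          assert (hy' : ~ col (p' m) y) by (intro h; apply hy, col_sym, h).
          destruct (proj_pt HyL hy') as [c [HcL [Hcc Hu]]].
          assert (Mc : M c) by exact (HS L y (p m) ne HyL HpL Hy Hpm c HcL).
          assert (Pc : Q c).
          { apply IH; auto. intros i hi hmi.
            destruct (Nat.eq_dec i m) as [->|ni]; [apply col_sym; auto|].
            apply col_sym.
            apply (@perp_sub (p' i) L y (p m) ne HyL HpL).
            - apply col_sym, Hc; auto; lia.
            - apply col_sym, (proj2 (Hpat m i hmk hi)). auto.
            - exact HcL. }
          assert (cne : c <> p m).
          { intros ->. apply (proj1 (Hpat m m hmk hmk)); auto. apply col_sym, Hcc. }
          exact (HQ L c (p m) cne HcL HpL Pc (Pp m hmk) y HyL). }
  intros y Hy. apply (claim k y Hy). intros; lia.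
Qed.

Definition disj (A B : pset Point) := forall x, A x -> B x -> False.

Lemma extend R M1 M2 k p p' a : Rmax R M2 -> subset M1 R -> disj M1 M2 ->
  fr M1 M2 k p p' -> M1 a -> (forall i, i < k -> col a (p' i)) ->
  exists b, M2 b /\ (forall i, i < k -> col (p i) b) /\ ~ col a b.
Proof.
  intros [HS [HC [HR Hm]]] H1R Hd Hfr Ha Hap.
  apply NNPP. intros Hno.
  assert (Hall : subset M2 (fun y => col a y)).
  { apply (proj_ind HS HC (fr_sym Hfr)).
    - apply perp_sub.
    - intros i hi; auto.
    - intros y Hy Hyp. apply NNPP. intros hn. apply Hno. exists y. split; auto.
      split; auto. intros i hi. apply col_sym, Hyp, hi. }
  apply (Hd a Ha). apply Hm. apply H1R, Ha. exact Hall.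
Qed.

Definition upd (p : nat -> Point) k a := fun i => if Nat.eq_dec i k then a else p i.

Lemma fr_ext M1 M2 k p p' a b : fr M1 M2 k p p' -> M1 a -> M2 b ->
  (forall i, i < k -> col a (p' i)) -> (forall i, i < k -> col (p i) b) -> ~ col a b ->
  fr M1 M2 (S k) (upd p k a) (upd p' k b).
Proof.
  intros [Hin Hpat] Ha Hb Hap Hpb Hab. unfold upd. split.
  - intros i hi. destruct (Nat.eq_dec i k) as [->|ne]; auto. apply Hin; lia.
  - intros i j hi hj.
    destruct (Nat.eq_dec i k) as [->|ni]; destruct (Nat.eq_dec j k) as [->|nj].
    + split; [intros h; contradiction|intros h; contradiction].
    + split; [lia|intros _; apply Hap; lia].
    + split; [lia|intros _; apply Hpb; lia].
    + apply Hpat; lia.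
Qed.

Definition pr (a b : Point) : pset Point := fun w => w = a \/ w = b.

Lemma pr_sub (T : pset Point) a b : subspace inc T -> T a -> T b -> subset (sp (pr a b)) T.
Proof. intros HT Ha Hb. apply span_min; auto. intros w [->| ->]; auto. Qed.

Lemma cut (s : list Point) (f : Point) : independent inc s -> clique (lset s) ->
  exists t, independent inc t /\ subset (lset t) (sp (lset s)) /\
    (forall x, In x t -> col x f) /\ length s <= S (length t).
Proof.
  intros [Hnd Hind] Hcl.
  destruct (classic (exists c, In c s /\ ~ col c f)) as [[c [Hcs Hcf]]|Hno].
  2:{ exists s. split; [split; auto|]. split; [apply span_incl|]. split; [|lia].
      intros x hx. apply NNPP. intro h. apply Hno. eauto. }
  destruct (in_split c s Hcs) as [s1 [s2 ->]].
  set (r := s1 ++ s2).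
  assert (Hndr : NoDup r) by (apply NoDup_remove_1 in Hnd; exact Hnd).
  assert (Hcr : ~ In c r) by (apply NoDup_remove_2 in Hnd; exact Hnd).
  assert (Hrs : forall y, In y r -> In y (s1 ++ c :: s2)).
  { intros y hy. apply in_app_or in hy. apply in_or_app. simpl. tauto. }
  set (s := s1 ++ c :: s2) in *.
  set (Sm := fun y => sp (fun w => In w s /\ w <> y)).
  assert (HSm : forall y, subspace inc (Sm y)) by (intros; apply span_sub).
  assert (Sm_in : forall y w, In w s -> w <> y -> Sm y w) by (intros y w h1 h2; apply span_incl; auto).
  set (rel := fun y z => col z f /\ z <> c /\ sp (pr c z) y /\ sp (pr c y) z).
  assert (Hcf' : ~ col f c) by (intro h; apply Hcf, col_sym, h).
  assert (ex_rel : forall y, In y r -> exists z, rel y z).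
  { intros y hy. assert (ync : y <> c) by (intros ->; contradiction).
    destruct (classic (col y f)) as [hyf|hyf].
    - exists y. split; auto. split; auto. split; apply span_incl; right; auto.
    - destruct (line_of (not_eq_sym ync) (Hcl c y Hcs (Hrs y hy))) as [L [HcL HyL]].
      destruct (proj_pt HcL Hcf') as [z [HzL [Hfz Hu]]].
      assert (znc : z <> c) by (intros ->; apply Hcf, col_sym, Hfz).
      exists z. split; [apply col_sym, Hfz|]. split; auto. split.
      + exact (@sp_sub (pr c z) L c z (not_eq_sym znc) HcL HzL
                 (sp_in (or_introl eq_refl)) (sp_in (or_intror eq_refl)) y HyL).
      + exact (@sp_sub (pr c y) L c y (not_eq_sym ync) HcL HyL
                 (sp_in (or_introl eq_refl)) (sp_in (or_intror eq_refl)) z HzL). }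
  assert (rel_fun : forall y z1 z2, In y r -> rel y z1 -> rel y z2 -> z1 = z2).
  { intros y z1 z2 hy [h1 [_ [_ h1']]] [h2 [_ [_ h2']]].
    assert (ync : y <> c) by (intros ->; contradiction).
    destruct (line_of (not_eq_sym ync) (Hcl c y Hcs (Hrs y hy))) as [L [HcL HyL]].
    assert (sub : subset (sp (pr c y)) (fun x => inc x L)) by (apply pr_sub; auto; apply line_sub).
    destruct (proj_pt HcL Hcf') as [z [HzL [Hfz Hu]]].
    rewrite (Hu z1 (sub _ h1') (col_sym h1)), (Hu z2 (sub _ h2') (col_sym h2)). auto. }
  assert (key : forall y y0 z, In y r -> In y0 r -> y0 <> y -> sp (pr c y0) z -> Sm y z).
  { intros y y0 z hy hy0 ne hz. revert z hz. apply pr_sub; [apply HSm| |].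
    - apply Sm_in; auto. intros ->; contradiction.
    - apply Sm_in; auto. }
  assert (build : forall r', incl r' r -> NoDup r' -> exists t, NoDup t /\ length t = length r' /\
            forall z, In z t -> exists y, In y r' /\ rel y z).
  { induction r' as [|y r0 IH]; intros hincl hnd.
    - exists []. split; [constructor|]. split; auto. intros z [].
    - inversion hnd as [|? ? hy0 hnd0]; subst.
      destruct IH as [t0 [ht0 [hl0 hz0]]]; [intros w hw; apply hincl; right; auto|auto|].
      assert (hy : In y r) by (apply hincl; left; auto).
      destruct (ex_rel y hy) as [z hz].
      exists (z :: t0). split; [|split; [simpl; auto|]].
      + constructor; auto. intros hin. destruct (hz0 z hin) as [y0 [hy0r hyz]].
        assert (ne : y0 <> y) by (intros ->; contradiction).
        assert (Sz : Sm y z).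
        { apply (key y y0 z hy (hincl y0 (or_intror hy0r)) ne). apply hyz. }
        apply (Hind y (Hrs y hy)).
        refine (pr_sub (HSm y) _ Sz (proj1 (proj2 (proj2 hz)))).
        apply Sm_in; [exact Hcs|]. intros e. apply Hcr. rewrite e. exact hy.
      + intros w [<-|hw]; [exists y; split; [left|]; auto|].
        destruct (hz0 w hw) as [y0 [h1 h2]]. exists y0; split; [right|]; auto. }
  destruct (build r (incl_refl r) Hndr) as [t [htnd [htl htz]]].
  exists t. split; [split; [exact htnd|]|split; [|split]].
  - intros x hx Hsp. destruct (htz x hx) as [y [hy hxy]].
    assert (sub : subset (sp (fun w => In w t /\ w <> x)) (Sm y)).
    { apply span_min; [apply HSm|]. intros z [hz nz].
      destruct (htz z hz) as [y' [hy' hyz]].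
      assert (ne : y' <> y).
      { intros ->. apply nz. apply (rel_fun y z x hy hyz hxy). }
      apply (key y y' z hy hy' ne). apply hyz. }
    apply (Hind y (Hrs y hy)).
    refine (pr_sub (HSm y) _ (sub x Hsp) (proj1 (proj2 (proj2 hxy)))).
    apply Sm_in; [exact Hcs|]. intros e. apply Hcr. rewrite e. exact hy.
  - intros z hz. destruct (htz z hz) as [y [hy hyz]].
    assert (Hc : sp (lset s) c) by (apply sp_in; exact Hcs).
    assert (Hy : sp (lset s) y) by (apply sp_in; apply Hrs, hy).
    exact (pr_sub (@sp_sub (lset s)) Hc Hy (proj2 (proj2 (proj2 hyz)))).
  - intros x hx. destruct (htz x hx) as [y [_ hyz]]. exact (proj1 hyz).
  - rewrite htl. unfold s, r. rewrite !length_app. simpl. lia.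
Qed.

Lemma cutn (s : list Point) (f : nat -> Point) k : independent inc s -> clique (lset s) ->
  exists t, independent inc t /\ subset (lset t) (sp (lset s)) /\
    (forall x i, In x t -> i < k -> col x (f i)) /\ length s <= length t + k.
Proof.
  intros Hi Hc. induction k as [|k IH].
  - exists s. split; auto. split; [intros x h; apply sp_in, h|]. split; [intros; lia|lia].
  - destruct IH as [t [ht [hts [htf hl]]]].
    assert (tc : clique (lset t)).
    { intros a b ha hb. apply (span_clique Hc); apply hts; auto. }
    destruct (cut (f k) ht tc) as [u [hu [hut [huf hl']]]].
    exists u. split; auto. split.
    + intros x hx. apply (sp_min (@sp_sub (lset s)) hts), hut, hx.
    + split; [|lia]. intros x i hx hi. destruct (Nat.eq_dec i k) as [->|ne]; [apply huf, hx|].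
      assert (H : subset (sp (lset t)) (fun y => col (f i) y)).
      { apply span_min; [apply perp_sub|]. intros y hy. apply col_sym, htf; auto; lia. }
      apply col_sym, H, hut, hx.
Qed.

Lemma bound_M M1 M2 k p p' (u : list Point) : subspace inc M1 -> clique M1 ->
  fr M1 M2 k p p' -> Aempty M1 k p' -> independent inc u -> subset (lset u) M1 ->
  length u <= k.
Proof.
  intros HS HC Hfr HA Hu HuM.
  assert (uc : clique (lset u)) by (intros a b ha hb; apply HC; apply HuM; auto).
  destruct (cutn p' k Hu uc) as [t [ht [hts [htf hl]]]].
  destruct t as [|x t].
  - simpl in hl. lia.
  - exfalso. apply (HA x).
    + apply (sp_min HS HuM), hts. left; auto.
    + intros i hi. apply htf; [left|]; auto.
Qed.


Lemma perp_sub' x : subspace inc (fun y => col y x).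
Proof.
  intros L a b ne ha hb Ha Hb r hr. apply col_sym.
  exact (@perp_sub x L a b ne ha hb (col_sym Ha) (col_sym Hb) r hr).
Qed.

Lemma res_max R M e f : Rmax R M -> M e -> ~ col e f ->
  Rmax (fun x => R x /\ col x e /\ col x f) (fun x => M x /\ col x f).
Proof.
  intros [HS [HC [HR Hm]]] He Hef.
  split; [apply sub_inter; [exact HS|apply perp_sub']|].
  split; [intros a b [ha _] [hb _]; apply HC; auto|].
  split; [intros x [hx hxf]; split; [apply HR, hx|split; [apply HC; auto|exact hxf]]|].
  intros x [hR [hxe hxf]] Hall. split; [|exact hxf].
  apply Hm; [exact hR|]. intros y Hy.
  destruct (classic (col y f)) as [hyf|hyf]; [apply Hall; split; auto|].
  destruct (classic (y = e)) as [->|ne]; [exact hxe|].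
  destruct (line_of ne (HC _ _ Hy He)) as [L [HyL HeL]].
  assert (hfy : ~ col f y) by (intro h; apply hyf, col_sym, h).
  destruct (proj_pt HyL hfy) as [c [HcL [Hfc _]]].
  assert (Mc : M c) by exact (HS L y e ne HyL HeL Hy He c HcL).
  assert (xc : col x c) by (apply Hall; split; auto; apply col_sym, Hfc).
  assert (cne : c <> e) by (intros ->; apply Hef, col_sym, Hfc).
  exact (@perp_sub x L c e cne HcL HeL xc hxe y HyL).
Qed.

Lemma Rmax_ext R R2 M : (forall x, R x <-> R2 x) -> Rmax R M -> Rmax R2 M.
Proof.
  intros E [a [b [c d]]]. split; [exact a|]. split; [exact b|].
  split; [intros x h; apply E, c, h|]. intros x h. apply d, E, h.
Qed.

Lemma fr_weak M1 M2 N1 N2 k p p' : subset M1 N1 -> subset M2 N2 ->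
  fr M1 M2 k p p' -> fr N1 N2 k p p'.
Proof.
  intros h1 h2 [Hin Hp]. split; auto. intros i hi. destruct (Hin i hi); auto.
Qed.

Lemma fr0 M1 M2 p p' : fr M1 M2 0 p p'.
Proof. split; intros; lia. Qed.

Lemma maxfr R M1 M2 N (d : Point) : Rmax R M2 -> subset M1 R -> disj M1 M2 ->
  (forall k p p', fr M1 M2 k p p' -> k <= N) ->
  exists k p p', fr M1 M2 k p p' /\ Aempty M1 k p'.
Proof.
  intros HM2 H1R Hd Hb. apply NNPP. intros Hno.
  assert (H : forall m, exists p p', fr M1 M2 m p p').
  { induction m as [|m [p [p' IH]]].
    - exists (fun _ => d), (fun _ => d). apply fr0.
    - assert (hA : ~ Aempty M1 m p') by (intro h; apply Hno; eauto).
      unfold Aempty in hA.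
      destruct (not_all_ex_not _ _ hA) as [a ha].
      apply imply_to_and in ha. destruct ha as [Ma ha].
      apply imply_to_and in ha. destruct ha as [hap _].
      destruct (extend HM2 H1R Hd IH Ma hap) as [b [Mb [hpb hab]]].
      exists (upd p m a), (upd p' m b). apply fr_ext; auto. }
  destruct (H (S N)) as [p [p' hf]]. apply Hb in hf. lia.
Qed.

Lemma B_empty R M1 M2 k p p' : Rmax R M1 -> Rmax R M2 -> disj M1 M2 ->
  fr M1 M2 k p p' -> Aempty M1 k p' -> Aempty M2 k p.
Proof.
  intros [HS1 [HC1 [HR1 Hm1]]] [HS2 [HC2 [HR2 Hm2]]] Hd Hfr HA b Hb Hbp.
  assert (sub : subset M1 (sp (lset (plist k p)))) by (apply (span_full HS1 HC1 Hfr HA)).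
  apply (Hd b); [|exact Hb]. apply Hm1; [apply HR2, Hb|].
  intros y Hy. apply sub in Hy. revert y Hy. apply span_min; [apply perp_sub|].
  intros y hy. destruct (plist_inv hy) as [i [hi ->]]. apply Hbp, hi.
Qed.

Lemma rank : forall k R M1 M2 p p' s, subspace inc R -> Rmax R M1 -> Rmax R M2 ->
  disj M1 M2 -> fr M1 M2 k p p' -> Aempty M1 k p' -> independent inc s ->
  clique (lset s) -> subset (lset s) R -> length s <= k.
Proof.
  intro k. induction k as [k IH] using lt_wf_ind.
  intros R M1 M2 p p' s HR H1 H2 Hd Hfr HA Hs Hsc HsR.
  set (SS := sp (lset s)).
  assert (SR : subset SS R) by (apply (sp_min HR HsR)).
  assert (Sc : clique SS) by (apply span_clique, Hsc).
  assert (HB := B_empty H1 H2 Hd Hfr HA).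
  destruct H2 as [HS2 [HC2 [HR2 Hm2]]] eqn:EH2.
  assert (M2sp : subset M2 (sp (lset (plist k p')))) by (apply (span_full HS2 HC2 (fr_sym Hfr) HB)).
  destruct (classic (exists q, SS q /\ M2 q)) as [[q [Sq Mq]]|Hno].
  2:{ destruct (cutn p' k Hs Hsc) as [t [ht [hts [htf hl]]]].
      destruct t as [|x t]; [simpl in hl; lia|].
      exfalso. apply Hno. exists x. split; [apply hts; left; auto|].
      apply Hm2; [apply SR, hts; left; auto|].
      intros y Hy. apply M2sp in Hy. revert y Hy. apply span_min; [apply perp_sub|].
      intros y hy. destruct (plist_inv hy) as [i [hi ->]]. apply htf; [left; auto|exact hi]. }
  destruct H1 as [HS1 [HC1 [HR1 Hm1]]] eqn:EH1.
  assert (He : exists e, M1 e /\ ~ col e q).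
  { apply NNPP. intros hn. apply (Hd q); [|exact Mq]. apply Hm1; [apply HR2, Mq|].
    intros y Hy. apply NNPP. intros hqy. apply hn. exists y. split; auto.
    intro h; apply hqy, col_sym, h. }
  destruct He as [e [Me Heq]].
  set (R' := fun x => R x /\ col x e /\ col x q).
  set (M1' := fun x => M1 x /\ col x q).
  set (M2' := fun x => M2 x /\ col x e).
  assert (H1' : Rmax R' M1') by (apply res_max; auto).
  assert (H2' : Rmax R' M2').
  { apply (Rmax_ext (R := fun x => R x /\ col x q /\ col x e)).
    - intros x. unfold R'. tauto.
    - apply res_max; auto. intro h; apply Heq, col_sym, h. }
  assert (HR' : subspace inc R').
  { apply sub_inter; [exact HR|apply sub_inter; apply perp_sub']. }
  assert (Hd' : disj M1' M2') by (intros x [a _] [b _]; apply (Hd x); auto).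
  assert (bnd : forall k2 p2 p2', fr M1' M2' k2 p2 p2' -> S k2 <= k).
  { intros k2 p2 p2' hf.
    assert (hf2 : fr M1 M2 k2 p2 p2').
    { revert hf. apply fr_weak; intros x [hx _]; exact hx. }
    assert (hf3 : fr M1 M2 (S k2) (upd p2 k2 e) (upd p2' k2 q)).
    { apply fr_ext; auto.
      - intros i hi. apply col_sym. apply (proj1 hf i hi).
      - intros i hi. apply (proj1 hf i hi). }
    replace (S k2) with (length (plist (S k2) (upd p2 k2 e)))
      by (unfold plist; rewrite length_map, length_seq; auto).
    apply (bound_M HS1 HC1 Hfr HA (fr_indep hf3)).
    intros x hx. destruct (plist_inv hx) as [i [hi ->]]. apply (proj1 hf3 i hi). }
  assert (bnd' : forall k2 p2 p2', fr M1' M2' k2 p2 p2' -> k2 <= k)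
    by (intros k2 p2 p2' h; specialize (bnd _ _ _ h); lia).
  destruct (maxfr e H2' (proj1 (proj2 (proj2 H1'))) Hd' bnd') as [k2 [p2 [p2' [hf hA]]]].
  assert (hk2 := bnd _ _ _ hf).
  destruct (cut e Hs Hsc) as [t [ht [hts [hte hl]]]].
  assert (tR : subset (lset t) R').
  { intros x hx. split; [apply SR, hts, hx|]. split; [apply hte, hx|].
    apply Sc; [apply hts, hx|exact Sq]. }
  assert (tc : clique (lset t)) by (intros a b ha hb; apply Sc; apply hts; auto).
  assert (IHt := IH k2 ltac:(lia) R' M1' M2' p2 p2' t HR' H1' H2' Hd' hf hA ht tc tR).
  lia.
Qed.

Lemma frame_exists n (d : Point) : has_rank inc n -> forall Y, nice inc Y ->
  exists p p', frame_of inc n Y p p'.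
Proof.
  intros [[S0 [l [HS0 [[Hl Hsl] Hlen]]]] Hub] Y [_ [M1 [M2 [HM1 [HM2 [H1Y [H2Y Hdj]]]]]]].
  assert (R1 := max_Rmax HM1). assert (R2 := max_Rmax HM2).
  assert (Hd : disj M1 M2) by exact Hdj.
  assert (bnd : forall k p p', fr M1 M2 k p p' -> k <= n).
  { intros k p p' hf.
    replace k with (length (plist k p)) by (unfold plist; rewrite length_map, length_seq; auto).
    apply (Hub M1); [exact (proj1 HM1)|apply (fr_indep hf)|].
    intros x hx. destruct (plist_inv hx) as [i [hi ->]]. apply (proj1 hf i hi). }
  destruct (maxfr d R2 (proj1 (proj2 (proj2 R1))) Hd bnd) as [k [p [p' [hf hA]]]].
  assert (hk := bnd _ _ _ hf).
  assert (hl : length l <= k).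
  { apply (rank (R := @fullset Point) (M1 := M1) (M2 := M2) (p := p) (p' := p')); auto.
    - intros L a b _ _ _ _ _ r _. exact I.
    - intros a b ha hb. apply (proj2 HS0); apply (proj1 (Hsl _)); apply sp_in; auto.
    - intros x _. exact I. }
  assert (k = n) by lia. subst k.
  assert (hB := B_empty R1 R2 Hd hf hA).
  exists p, p'. exists M1, M2.
  split; [exact HM1|]. split; [exact HM2|]. split; [exact H1Y|]. split; [exact H2Y|].
  split; [exact Hdj|]. split; [|split].
  - split; [apply (fr_indep hf)|]. intros x; split; intros hx.
    + revert x hx. apply span_min; [apply (proj1 HM1)|].
      intros x hx. destruct (plist_inv hx) as [i [hi ->]]. apply (proj1 hf i hi).
    + apply (span_full (proj1 (proj1 HM1)) (proj2 (proj1 HM1)) hf hA), hx.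
  - split; [apply (fr_indep (fr_sym hf))|]. intros x; split; intros hx.
    + revert x hx. apply span_min; [apply (proj1 HM2)|].
      intros x hx. destruct (plist_inv hx) as [i [hi ->]]. apply (proj1 hf i hi).
    + apply (span_full (proj1 (proj1 HM2)) (proj2 (proj1 HM2)) (fr_sym hf) hB), hx.
  - exact (proj2 hf).
Qed.

End G.

Unset Implicit Arguments.

Theorem lemma3 (Point Line : Type) (inc : Point -> Line -> Prop) (n : nat)
  (Hgeom : polar_space inc) (Hnd : nondegenerate inc)
  (Hrank : has_rank inc n) (Hn : 2 <= n) (Hthick : no_thin_lines inc)
  (X : nat -> pset Point)
  (Hnice : forall k, nice inc (X k))
  (Hnice_om : nice inc (@fullset Point))
  (Hincr : forall k m, k < m -> subset (X k) (X m) /\ ~ subset (X m) (X k))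
  (Hincr_om : forall k, ~ subset (@fullset Point) (X k))
  (Hwo : well_ordered_chain inc (omega_chain X)) :
  (maximal_among_wo_chains inc (omega_chain X) <->
   maximal_among_chains inc (omega_chain X)) /\
  (maximal_among_chains inc (omega_chain X) <->
   ((forall p p', frame_of inc n (X 0) p p' ->
        seteq (span inc (frame_points n p p')) (X 0)) /\
    (forall k, maximal_proper_subspace inc (X k) (X (S k))) /\
    (forall x, exists k, X k x))).
Proof.
  assert (Hd : exists d : Point, True).
  { destruct Hrank as [[S0 [l [_ [_ Hlen]]]] _].
    destruct l as [|d l]; [simpl in Hlen; lia|]. exists d; auto. }
  destruct Hd as [d _].
  apply (@main_from_frames Point Line inc n X Hnice Hnice_om Hincr Hincr_om Hwo).
  intros Y HY. exact (frame_exists Hgeom d Hrank HY).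
Qed.
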